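(* Let $\{x_k\}$, $\{\tilde x_k\}$ and $\{\xi_k\}$ be the sequences produced by Algorithm DFNDFL (described in the context) applied to $\min\{f(x): x\in X\cap\mathcal{Z}\}$, let $H=\{k:\xi_{k+1}<\xi_k\}$, and let $x^*\in X\cap\mathcal{Z}$ be any accumulation point of $\{x_k\}_{k\in H}$. Then $f(x^* )\le f(\bar x)$ for all $\bar x\in\mathcal{B}^z(x^* )$, where $\mathcal{B}^z(x^* )=\{x^*+d: d\in D^z(x^* )\}$.
   Context: Setting. $\{1,\dots,n\}=I^c\cup I^z$, $I^c\cap I^z=\emptyset$; for $v\in\mathbb{R}^n$, $v_c=(v_i)_{i\in I^c}$, $v_z=(v_i)_{i\in I^z}$. $l,u\in\mathbb{R}^n$ finite, $l_i<u_i$, $l_i,u_i\in\mathbb{Z}$ for $i\in I^z$; $X=\{x:l\le x\le u\}$; $\mathcal{Z}=\{x:x_i\in\mathbb{Z}\ \forall i\in I^z\}$; $[x]_{[l,u]}=\max\{l,\min\{u,x\}\}$ componentwise; $\|\cdot\|$ Euclidean. $f:\mathbb{R}^n\to\mathbb{R}$ is Lipschitz w.r.t. continuous variables: $\exists L>0$, $|f(x)-f(y)|\le L\|x-y\|$ whenever $x_z=y_z$. A vector in $\mathbb{Z}^p$ is primitive if the gcd of its components is 1. For $x\in X\cap\mathcal{Z}$: $D^z(x)=\{d\in\mathbb{Z}^n: d_i=0\ (i\in I^c),\ d_z \text{ primitive},\ x+d\in X\cap\mathcal{Z}\}$; $D^c(x)=\{s\in\mathbb{R}^n: s_i=0\ (i\in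 I^z),\ s_i\ge0 \text{ if } i\in I^c, x_i=l_i,\ s_i\le 0 \text{ if } i\in I^c, x_i=u_i\}$. Procedures (data $\gamma>0$, $\delta\in(0,1)$). PCS$(\tilde\alpha,w,p)$: set $\alpha=\tilde\alpha$; if $f([w+\alpha p]_{[l,u]})\le f(w)-\gamma\alpha^2$ set $\tilde p=p$, else if $f([w-\alpha p]_{[l,u]})\le f(w)-\gamma\alpha^2$ set $\tilde p=-p$, else return $(0,p)$; then repeat: $\beta=\alpha/\delta$; if $f([w+\beta\tilde p]_{[l,u]})>f(w)-\gamma\beta^2$ return $(\alpha,\tilde p)$, else $\alpha=\beta$. DS$(\tilde\alpha,w,p,\xi)$: let $\bar\alpha$ be the largest $\alpha\ge0$ with $w+\alpha p\in X\cap\mathcal{Z}$, set $\alpha=\min\{\bar\alpha,\tilde\alpha\}$; if not ($\alpha>0$ and $f(w+\alpha p)\le f(w)-\xi$) return $0$; otherwise, while $\alpha<\bar\alpha$ and $f(w+\min\{\bar\alpha,2\alpha\}p)\le f(w)-\xi$, set $\alpha=\min\{\bar\alpha,2\alpha\}$; then return $\alpha$. Algorithm DFNDFL. Data: $x_0\in X\cap\mathcal{Z}$, $\xi_0>0$, $\theta\in(0,1)$; a sequence $\{s_k\}$ with $s_k\in D^c(x_0)$, $\|s_k\|=1$; $\tilde\alpha^c_0=1$; a set $D_0\subset D^z(x_0)$ with $\tilde\alpha^{(d)}_0=1$ for $d\in D_0$; $D:=D_0$ (tentative steps $\tilde\alpha^{(d)}$ not updated in an iteration keep their value). For $k=0,1,\dots$: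 Phase 1: $(\alpha^c_k,\tilde s_k)=$PCS$(\tilde\alpha^c_k,x_k,s_k)$; if $\alpha^c_k=0$ set $\tilde\alpha^c_{k+1}=\theta\tilde\alpha^c_k$, $\tilde x_k=x_k$; else $\tilde\alpha^c_{k+1}=\alpha^c_k$, $\tilde x_k=[x_k+\alpha^c_k\tilde s_k]_{[l,u]}$. Phase 2.A: set $y^+=\tilde x_k$; while $D\ne\emptyset$ and $y^+=\tilde x_k$: choose $d\in D$, set $D=D\setminus\{d\}$, $y=y^+$, $\alpha=$DS$(\tilde\alpha^{(d)}_k,y,d,\xi_k)$; if $\alpha=0$ set $y^+=y$, $\tilde\alpha^{(d)}_{k+1}=\max\{1,\lfloor\tilde\alpha^{(d)}_k/2\rfloor\}$; else $y^+=y+\alpha d$, $\tilde\alpha^{(d)}_{k+1}=\alpha$. Phase 2.B: if $y^+=\tilde x_k$ and the Discrete Search failed (returned $0$) with $\tilde\alpha^{(d)}_k=1$ for all $d\in D_k$, then set $\xi_{k+1}=\theta\xi_k$ and: if $D_k\supseteq D^z(\tilde x_k)$ set $D_{k+1}=D_k$; otherwise generate $D_{k+1}$ with $D_{k+1}\subseteq D^z(\tilde x_k)$, $D_{k+1}\supset D_k$ (strictly), and set $\tilde\alpha^{(d)}_{k+1}=1$ for $d\in D_{k+1}\setminus D_k$. Otherwise set $D_{k+1}=D_k$ and $\xi_{k+1}=\xi_k$. In all cases set $D=D_{k+1}$. Phase 3: choose any $x_{k+1}\in X\cap\mathcal{Z}$ with $f(x_{k+1})\le f(y^+)$. *)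

(* Defs.v *)
From mathcomp Require Import all_boot all_order all_algebra.
From mathcomp Require Import boolp classical_sets reals.
Set Implicit Arguments. Unset Strict Implicit. Unset Printing Implicit Defensive.
Import Order.TTheory GRing.Theory Num.Theory.
Local Open Scope ring_scope.
Local Open Scope classical_set_scope.

Section DFNDFL.
Variables (R : realType) (n : nat).

Definition vec := 'I_n -> R.

(* Ic i = true iff i is a continuous index (i in I^c); otherwise i in I^z *)
Variable Ic : pred 'I_n.
Variables (l u : vec).

Definition vadd (x y : vec) : vec := fun i => x i + y i.
Definition vsub (x y : vec) : vec := fun i => x i - y i.
Definition vscale (a : R) (x : vec) : vec := fun i => a * x i.
Definition vopp (x : vec) : vec := fun i => - x i.

Definition vnorm (x : vec) : R := Num.sqrt (\sum_(i < n) x i ^+ 2).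

Definition inX (x : vec) : Prop := forall i, l i <= x i <= u i.
Definition inZ (x : vec) : Prop := forall i, ~~ Ic i -> x i \is a Num.int.
Definition inXZ (x : vec) : Prop := inX x /\ inZ x.

Definition proj (x : vec) : vec := fun i => Num.max (l i) (Num.min (u i) (x i)).

Definition Dz (x : vec) : set vec :=
  [set d | (exists z : 'I_n -> int,
              (forall i, d i = (z i)%:~R) /\
              (\big[gcdn/0%N]_(i < n | ~~ Ic i) `|z i|%N = 1%N)) /\
           (forall i, Ic i -> d i = 0) /\
           inXZ (vadd x d)].

Definition Dc (x : vec) : set vec :=
  [set s | (forall i, ~~ Ic i -> s i = 0) /\
           (forall i, Ic i -> x i = l i -> 0 <= s i) /\
           (forall i, Ic i -> x i = u i -> s i <= 0)].

Variable f : vec -> R.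
Variables (gamma delta : R).

Definition pcs_ok (w p : vec) (a : R) : Prop :=
  f (proj (vadd w (vscale a p))) <= f w - gamma * a ^+ 2.

(* PCS(at, w, p) returns (alpha, pt) *)
Definition PCS (at_ : R) (w p : vec) (alpha : R) (pt : vec) : Prop :=
  (~ pcs_ok w p at_ /\ ~ pcs_ok w (vopp p) at_ /\ alpha = 0 /\ pt = p) \/
  (((pcs_ok w p at_ /\ pt = p) \/
    (~ pcs_ok w p at_ /\ pcs_ok w (vopp p) at_ /\ pt = vopp p)) /\
   exists j : nat,
     (forall i : nat, (1 <= i <= j)%N -> pcs_ok w pt (at_ / delta ^+ i)) /\
     ~ pcs_ok w pt (at_ / delta ^+ j.+1) /\
     alpha = at_ / delta ^+ j).

Definition ds_seq (abar a0 : R) (i : nat) : R :=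
  iter i (fun a => Num.min abar (2 * a)) a0.

(* DS(at, w, p, xi) returns alpha *)
Definition DS (at_ : R) (w p : vec) (xi : R) (alpha : R) : Prop :=
  exists abar : R,
    0 <= abar /\ inXZ (vadd w (vscale abar p)) /\
    (forall a, 0 <= a -> inXZ (vadd w (vscale a p)) -> a <= abar) /\
    let a0 := Num.min abar at_ in
    ((~ (0 < a0 /\ f (vadd w (vscale a0 p)) <= f w - xi) /\ alpha = 0) \/
     ((0 < a0 /\ f (vadd w (vscale a0 p)) <= f w - xi) /\
      exists j : nat,
        (forall i : nat, (i < j)%N ->
           ds_seq abar a0 i < abar /\
           f (vadd w (vscale (ds_seq abar a0 i.+1) p)) <= f w - xi) /\
        ~ (ds_seq abar a0 j < abar /\
           f (vadd w (vscale (ds_seq abar a0 j.+1) p)) <= f w - xi) /\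
        alpha = ds_seq abar a0 j)).

Variables (theta : R) (s : nat -> vec).

(* One iteration k of Algorithm DFNDFL.
   xk = x_k, atc = tilde alpha^c_k, atc' = tilde alpha^c_{k+1},
   xt = tilde x_k, xi = xi_k, xi' = xi_{k+1}, Dk = D_k, Dk' = D_{k+1},
   at_ = (d |-> tilde alpha^(d)_k), at' = (d |-> tilde alpha^(d)_{k+1}),
   yp = y^+ at the end of Phase 2, xk' = x_{k+1}. *)
Definition DFNDFL_step (k : nat) (xk : vec) (atc atc' : R) (xt : vec)
  (xi xi' : R) (Dk Dk' : set vec) (at_ at' : vec -> R) (yp xk' : vec) : Prop :=
  (exists (ac : R) (st : vec),
     PCS atc xk (s k) ac st /\
     ((ac = 0 /\ atc' = theta * atc /\ xt = xk) \/
      (ac <> 0 /\ atc' = ac /\ xt = proj (vadd xk (vscale ac st))))) /\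
  (* Phase 2.A : t 0, ..., t (m-1) are the (distinct) directions of D_k
     chosen in order, al j is the value returned by the j-th Discrete Search *)
  (exists (m : nat) (t : nat -> vec) (al : nat -> R),
     (forall j, (j < m)%N -> Dk (t j)) /\
     (forall j j', (j < m)%N -> (j' < m)%N -> t j = t j' -> j = j') /\
     (forall j, (j < m)%N -> DS (at_ (t j)) xt (t j) xi (al j)) /\
     (forall j, (j.+1 < m)%N -> al j = 0) /\
     ((* the loop stopped because D became empty, no success *)
      ((forall d, Dk d -> exists2 j, (j < m)%N & d = t j) /\
       (forall j, (j < m)%N -> al j = 0) /\ yp = xt) \/
      (* the loop stopped because the last search succeeded *)
      ((0 < m)%N /\ al m.-1 <> 0 /\ yp = vadd xt (vscale (al m.-1) (t m.-1))))
     /\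
     (forall j, (j < m)%N ->
        at' (t j) = if al j == 0
                    then Num.max 1 ((Num.floor (at_ (t j) / 2))%:~R)
                    else al j) /\
     (forall d, (forall j, (j < m)%N -> d <> t j) -> Dk d -> at' d = at_ d) /\
     (forall d, ~ Dk d -> ~ Dk' d -> at' d = at_ d) /\
     (let cond := yp = xt /\ (forall d, Dk d -> DS (at_ d) xt d xi 0 /\ at_ d = 1) in
      (cond ->
         xi' = theta * xi /\
         ((Dz xt `<=` Dk -> Dk' = Dk) /\
          (~ (Dz xt `<=` Dk) ->
             Dk' `<=` Dz xt /\ Dk `<=` Dk' /\ Dk' <> Dk /\
             (forall d, Dk' d -> ~ Dk d -> at' d = 1)))) /\
      (~ cond -> Dk' = Dk /\ xi' = xi))) /\
  inXZ xk' /\ f xk' <= f yp.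

Definition DFNDFL_run (x0 : vec) (xi0 : R) (D0 : set vec)
  (x xt : nat -> vec) (xi atc : nat -> R) (D : nat -> set vec)
  (at_ : nat -> vec -> R) (yp : nat -> vec) : Prop :=
  x 0%N = x0 /\ xi 0%N = xi0 /\ atc 0%N = 1 /\ D 0%N = D0 /\
  (forall d, D0 d -> at_ 0%N d = 1) /\
  forall k : nat,
    DFNDFL_step k (x k) (atc k) (atc k.+1) (xt k) (xi k) (xi k.+1)
      (D k) (D k.+1) (at_ k) (at_ k.+1) (yp k) (x k.+1).

End DFNDFL.

(* Main.v *)
Require Import Defs.
From mathcomp Require Import all_boot all_order all_algebra.
From mathcomp Require Import boolp classical_sets reals.
From mathcomp Require Import ring lra zify.
Import Order.TTheory GRing.Theory Num.Theory.
Local Open Scope ring_scope.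
Local Open Scope classical_set_scope.

Lemma vnorm_ge0 (R : realType) n (v : vec R n) : 0 <= vnorm v.
Proof. exact: sqrtr_ge0. Qed.

Lemma vnorm_sq (R : realType) n (v : vec R n) : vnorm v ^+ 2 = \sum_(i < n) v i ^+ 2.
Proof. by rewrite /vnorm sqr_sqrtr // sumr_ge0 // => i _; exact: sqr_ge0. Qed.

Lemma coord_le_vnorm (R : realType) n (v : vec R n) i : `|v i| <= vnorm v.
Proof.
rewrite -sqrtr_sqr /vnorm ler_sqrt; last by rewrite sumr_ge0 // => j _; exact: sqr_ge0.
rewrite (bigD1 i) //= lerDl sumr_ge0 // => j _; exact: sqr_ge0.
Qed.

Lemma int_close (R : realType) (x y : R) : x \is a Num.int -> y \is a Num.int ->
  `|x - y| < 1 -> x = y.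
Proof.
move=> hx hy h; apply/eqP; rewrite -subr_eq0; apply/negPn/negP => hne.
have := norm_intr_ge1 (rpredB hx hy) hne; lra.
Qed.

Lemma mymin_l {R : realType} {u y : R} : u <= y -> Num.min u y = u.
Proof. move=> h; rewrite /Num.min /Order.min; case: ltP => //; lra. Qed.
Lemma mymin_r {R : realType} {u y : R} : y <= u -> Num.min u y = y.
Proof. move=> h; rewrite /Num.min /Order.min; case: ltP => //; lra. Qed.
Lemma mymax_l {R : realType} {u y : R} : y <= u -> Num.max u y = u.
Proof. move=> h; rewrite /Num.max /Order.max; case: ltP => //; lra. Qed.
Lemma mymax_r {R : realType} {u y : R} : u <= y -> Num.max u y = y.
Proof. move=> h; rewrite /Num.max /Order.max; case: ltP => //; lra. Qed.
Lemma proj_sq (R : realType) (l u x y : R) : l <= x <= u ->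
  (Num.max l (Num.min u y) - x) ^+ 2 <= (y - x) ^+ 2.
Proof.
move=> /andP[h1 h2].
rewrite /Num.min /Num.max /Order.min /Order.max.
case: (ltP u y) => h3; [case: (ltP l u) => h4 | case: (ltP l y) => h4]; nra.
Qed.

Lemma proj_in (R : realType) (l u y : R) : l <= u ->
  l <= Num.max l (Num.min u y) <= u.
Proof.
move=> h; rewrite /Num.min /Num.max /Order.min /Order.max.
case: (ltP u y) => h3; [case: (ltP l u) => h4 | case: (ltP l y) => h4]; apply/andP; lra.
Qed.

Lemma proj_id (R : realType) (l u x : R) : l <= x <= u -> Num.max l (Num.min u x) = x.
Proof.
move=> /andP[h1 h2]; rewrite /Num.min /Num.max /Order.min /Order.max.
case: (ltP u x) => h3; [case: (ltP l u) => h4 | case: (ltP l x) => h4]; lra.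
Qed.

Lemma DS_success (R : realType) n (Ic : pred 'I_n) (l u : vec R n) f at_ w p xi al :
  DS Ic l u f at_ w p xi al -> al != 0 -> f (vadd w (vscale al p)) <= f w - xi.
Proof.
move=> [abar [_ [_ [_ H]]]] hal; simpl in H.
case: H => [[_ hal0] | [[hpos hf] [j [hj [_ ->]]]]]; first by rewrite hal0 eqxx in hal.
case: j hj => [|j] hj; first exact: hf.
exact: (hj j (ltnSn j)).2.
Qed.

Lemma DS_fail (R : realType) n (Ic : pred 'I_n) (l u : vec R n) f w d xi :
  DS Ic l u f 1 w d xi 0 -> inXZ Ic l u (vadd w d) -> f w - xi < f (vadd w d).
Proof.
move=> [abar [hab0 [_ [hmax H]]]] hin; simpl in H.
have e1 : vscale 1 d = d by apply: funext => i; rewrite /vscale mul1r.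
have h1 : 1 <= abar by apply: hmax => //; rewrite e1.
have ea : Num.min abar 1 = 1.
  by rewrite /Num.min /Order.min; case: (ltP abar 1) => h; lra.
rewrite ea e1 in H.
case: H => [[hn _] | [_ [j [_ [_ hj]]]]].
  by rewrite real_ltNge ?num_real //; apply/negP => h; apply: hn; split.
have : 1 <= ds_seq abar 1 j.
  elim: j {hj} => [|j IH] /=; first exact: lexx.
  rewrite /Num.min /Order.min; case: ltP => h; lra.
rewrite -hj; lra.
Qed.

Lemma PCS_ok (R : realType) n (l u : vec R n) f gamma delta at_ w p ac st :
  PCS l u f gamma delta at_ w p ac st -> ac != 0 ->
  pcs_ok l u f gamma w st ac /\ (st = p \/ st = vopp p).
Proof.
case => [[_ [_ [-> _]]] | [hst [j [hj [_ ->]]]]]; first by rewrite eqxx.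
move=> _.
have hst' : pcs_ok l u f gamma w st at_ /\ (st = p \/ st = vopp p).
  by case: hst => [[h ->] | [_ [h ->]]]; split => //; [left | right].
split; last exact: hst'.2.
case: j hj => [|j] hj; first by rewrite expr0 divr1; exact: hst'.1.
by apply: hj; rewrite leqnn andbT.
Qed.

Lemma phase1 (R : realType) n (Ic : pred 'I_n) (l u : vec R n) f gamma delta theta
  atc atc' (xk sk xt : vec R n) :
  0 <= gamma -> (forall i, l i <= u i) ->
  (forall i, l i <= xk i <= u i) -> (forall i, ~~ Ic i -> sk i = 0) -> vnorm sk = 1 ->
  (exists (ac : R) (st : vec R n),
     PCS l u f gamma delta atc xk sk ac st /\
     ((ac = 0 /\ atc' = theta * atc /\ xt = xk) \/
      (ac <> 0 /\ atc' = ac /\ xt = proj l u (vadd xk (vscale ac st))))) ->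
  (forall i, l i <= xt i <= u i) /\ (forall i, ~~ Ic i -> xt i = xk i) /\
  f xt + gamma * vnorm (vsub xt xk) ^+ 2 <= f xk.
Proof.
move=> hg hlu hx hsz hsn [ac [st [hpcs [[_ [_ ->]] | [hac [_ ->]]]]]].
  split => //; split => //.
  have -> : vnorm (vsub xk xk) = 0.
    rewrite /vnorm /vsub big1 ?sqrtr0 // => i _; by rewrite subrr expr0n.
  by rewrite expr0n /= mulr0 addr0.
have [hok hst] := PCS_ok _ _ _ _ _ _ _ _ _ _ _ _ hpcs (introN eqP hac).
have hstz : forall i, ~~ Ic i -> st i = 0.
  by move=> i hi; case: hst => ->; rewrite /vopp ?hsz ?oppr0.
have hsts : \sum_(i < n) st i ^+ 2 = 1.
  rewrite -(expr1n _ 2) -hsn vnorm_sq.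
  by case: hst => -> //; apply: eq_bigr => i _; rewrite /vopp sqrrN.
split; first by move=> i; rewrite /proj; apply: proj_in.
split.
  move=> i hi; rewrite /proj /vadd /vscale hstz // mulr0 addr0; exact: proj_id.
have hn : vnorm (vsub (proj l u (vadd xk (vscale ac st))) xk) ^+ 2 <= ac ^+ 2.
  rewrite vnorm_sq -[ac ^+ 2]mulr1 -hsts mulr_sumr.
  apply: ler_sum => i _; rewrite /vsub /proj.
  refine (le_trans (proj_sq _ _ _ _ _ (hx i)) _).
  by rewrite /vadd /vscale addrC addKr exprMn.
move: hok; rewrite /pcs_ok => hok.
have := ler_wpM2l hg hn; lra.
Qed.

Lemma Dz_fin (R : realType) n (Ic : pred 'I_n) (l u : vec R n) :
  exists (T : finType) (g : T -> vec R n), forall y e,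
    (forall i, l i <= y i <= u i) -> Dz Ic l u y e -> exists t, e = g t.
Proof.
pose B := (\max_(i < n) Num.Def.archi_bound (`|u i - l i|)%R)%N.
exists {ffun 'I_n -> 'I_(B.*2).+1}, (fun (t : {ffun 'I_n -> 'I_(B.*2).+1}) (i : 'I_n) => (((t i : nat)%:Z - B%:Z)%R%:~R : R)).
move=> y e hy [[z [hz _]] [_ [hX _]]].
have hzB : forall i, `|z i| <= B%:Z.
  move=> i; have h1 := hy i; have h2 := hX i; rewrite /vadd hz in h2.
  have h3 : `|(z i)%:~R| <= `|u i - l i| :> R.
    apply: le_trans (ler_norm _); rewrite ler_norml.
    move/andP: h1 => [h1 h1']; move/andP: h2 => [h2 h2']; apply/andP; lra.
  have hb := archi_boundP (normr_ge0 (u i - l i)).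
  have hm : (Num.Def.archi_bound (`|u i - l i|)%R <= B)%N
    by rewrite /B; apply: (@leq_bigmax _ (fun i0 : 'I_n => Num.Def.archi_bound (`|u i0 - l i0|)%R) i).
  have : `|z i|%:~R < (B%:Z)%:~R :> R.
    rewrite intr_norm; apply: le_lt_trans h3 _; apply: lt_le_trans hb _.
    by rewrite ler_nat.
  by rewrite ltr_int => /ltW.
exists [ffun i => inord (absz (z i + B%:Z)%R)].
apply: funext => i; rewrite hz ffunE inordK; last by have := hzB i; lia.
by congr (_%:~R); have := hzB i; lia.
Qed.
Theorem mainTheorem4 (R : realType) (n : nat) (Ic : pred 'I_n) (l u : vec R n)
  (f : vec R n -> R) (gamma delta xi0 theta : R)
  (x0 : vec R n) (s : nat -> vec R n) (D0 : set (vec R n))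
  (* problem data *)
  (hlu : forall i, l i < u i)
  (hlz : forall i, ~~ Ic i -> l i \is a Num.int)
  (huz : forall i, ~~ Ic i -> u i \is a Num.int)
  (hLip : exists L : R, 0 < L /\
     forall x y : vec R n, (forall i, ~~ Ic i -> x i = y i) ->
       `|f x - f y| <= L * vnorm (vsub x y))
  (* algorithm data *)
  (hgamma : 0 < gamma) (hdelta : 0 < delta < 1)
  (hxi0 : 0 < xi0) (htheta : 0 < theta < 1)
  (hx0 : inXZ Ic l u x0)
  (hs : forall k, Dc Ic l u x0 (s k) /\ vnorm (s k) = 1)
  (hD0 : D0 `<=` Dz Ic l u x0)
  (* a run of the algorithm *)
  (x xt : nat -> vec R n) (xi atc : nat -> R) (D : nat -> set (vec R n))
  (at_ : nat -> vec R n -> R) (yp : nat -> vec R n)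
  (hrun : DFNDFL_run Ic l u f gamma delta theta s x0 xi0 D0 x xt xi atc D at_ yp)
  (* x* an accumulation point of {x_k}_{k in H}, H = {k : xi_{k+1} < xi_k} *)
  (xstar : vec R n) (hxstar : inXZ Ic l u xstar)
  (hacc : forall eps : R, 0 < eps -> forall N : nat,
     exists k : nat, (N <= k)%N /\ xi k.+1 < xi k /\ vnorm (vsub (x k) xstar) < eps) :
  forall d : vec R n, Dz Ic l u xstar d -> f xstar <= f (vadd xstar d).
Proof.
move=> d hd.
have [L [hL hLipf]] := hLip.
case: hrun => hx0e [hxi0e [_ [hD0e [_ hstep]]]].
have hlu' : forall i, l i <= u i by move=> i; exact: ltW.
have hg0 : 0 <= gamma by exact: ltW.
have [ht0 ht1] : 0 < theta /\ theta < 1 by move/andP: htheta.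
have hxin : forall k, inXZ Ic l u (x k).
  elim=> [|k IH]; first by rewrite hx0e.
  by have [_ [_ [h _]]] := hstep k.
have hP1 : forall k, (forall i, l i <= xt k i <= u i) /\
    (forall i, ~~ Ic i -> xt k i = x k i) /\
    f (xt k) + gamma * vnorm (vsub (xt k) (x k)) ^+ 2 <= f (x k).
  move=> k; have [hp1 _] := hstep k.
  have [[hsz _] hsn] := hs k.
  exact: (phase1 _ _ _ _ _ _ _ _ _ _ _ _ _ _ hg0 hlu' (hxin k).1 hsz hsn hp1).
have hP2 : forall k,
    (xi k.+1 = theta * xi k \/ xi k.+1 = xi k) /\
    (D k `<=` D k.+1) /\
    (xi k.+1 < xi k ->
       (forall e, D k e -> DS Ic l u f (at_ k e) (xt k) e (xi k) 0 /\ at_ k e = 1) /\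
       (~ (Dz Ic l u (xt k) `<=` D k) ->
          D k.+1 `<=` Dz Ic l u (xt k) /\ D k.+1 <> D k)) /\
    (0 <= xi k -> f (x k.+1) <= f (xt k)).
  move=> k; have [_ [[m [t [al [h1 [h2 [h3 [h4 [h5 [h6 [h7 [h8 h9]]]]]]]]]]] [_ hfx]]] := hstep k.
  move: h9 => /= [hc1 hc2].
  case: (pselect (yp k = xt k /\ (forall e, D k e -> DS Ic l u f (at_ k e) (xt k) e (xi k) 0 /\ at_ k e = 1))) => hc.
    have [hxi [hsub hnsub]] := hc1 hc.
    split; first by left.
    split.
      case: (pselect (Dz Ic l u (xt k) `<=` D k)) => hz; first by rewrite (hsub hz).
      by have [_ [h _]] := hnsub hz.
    split; first by move=> _; split; [exact: hc.2 | move=> hz; have [ha [_ [hb _]]] := hnsub hz].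
    by move=> _; rewrite -hc.1.
  have [hDe hxie] := hc2 hc.
  split; first by right.
  split; first by rewrite hDe.
  split; first by rewrite hxie ltxx.
  move=> hxnn; apply: le_trans hfx _.
  case: h5 => [[_ [_ ->]] | [hm [hal ->]]] //.
  have hmm : (m.-1 < m)%N by rewrite ltn_predL.
  have := DS_success _ _ _ _ _ _ _ _ _ _ _ (h3 _ hmm) (introN eqP hal).
  move=> h; apply: le_trans h _; lra.
have hxipos : forall k, 0 < xi k.
  elim=> [|k IH]; first by rewrite hxi0e.
  by case: (hP2 k).1 => ->; [exact: mulr_gt0 | ].
have hxidec : forall k k', (k <= k')%N -> xi k' <= xi k.
  move=> k k' /subnK <-; elim: (k' - k)%N => [|j IH]; first by rewrite add0n.
  rewrite addSn; apply: le_trans IH.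
  by case: (hP2 (j + k)%N).1 => ->; [have := hxipos (j + k)%N; nra | exact: lexx].
have hfdec : forall k, f (x k.+1) + gamma * vnorm (vsub (xt k) (x k)) ^+ 2 <= f (x k).
  move=> k; have := (hP2 k).2.2.2 (ltW (hxipos k)); have := (hP1 k).2.2; lra.
have hfmono : forall k k', (k <= k')%N -> f (x k') <= f (x k).
  move=> k k' /subnK <-; elim: (k' - k)%N => [|j IH]; first by rewrite add0n.
  rewrite addSn; apply: le_trans IH.
  have := hfdec (j + k)%N.
  have : 0 <= gamma * vnorm (vsub (xt (j + k)%N) (x (j + k)%N)) ^+ 2.
    by apply: mulr_ge0 => //; exact: sqr_ge0.
  lra.
have hclose : forall k, vnorm (vsub (x k) xstar) < 1 -> forall i, ~~ Ic i -> x k i = xstar i.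
  move=> k hk i hi; apply: int_close ((hxin k).2 i hi) (hxstar.2 i hi) _.
  exact: le_lt_trans (coord_le_vnorm _ _ (vsub (x k) xstar) i) hk.
have hlow : forall k, f xstar - L <= f (x k).
  move=> k; have [k' [hk' [_ hc]]] := hacc 1 ltr01 k.
  have := hLipf _ _ (hclose _ hc).
  have := hfmono _ _ hk'.
  have : L * vnorm (vsub (x k') xstar) <= L.
    by rewrite -[X in _ <= X]mulr1; apply: ler_wpM2l; [exact: ltW | exact: ltW].
  rewrite ler_norml; move=> h1 h2 /andP[h3 h4]; lra.
have hstep0 : forall e, 0 < e -> exists N, forall k, (N <= k)%N -> vnorm (vsub (xt k) (x k)) < e.
  move=> e he; apply: contrapT => hne.
  have hinf : forall N, exists2 k, (N <= k)%N & e <= vnorm (vsub (xt k) (x k)).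
    move=> N; apply: contrapT => hno; apply: hne; exists N => k hk.
    rewrite ltNge; apply/negP => hle; apply: hno; by exists k.
  pose q := gamma * e ^+ 2.
  have hq : 0 < q by apply: mulr_gt0 => //; exact: exprn_gt0.
  have hdesc : forall m : nat, exists N, f (x N) <= f (x 0%N) - m%:R * q.
    elim=> [|m [N hN]]; first by exists 0%N; rewrite mul0r subr0.
    have [k hk hek] := hinf N.
    exists k.+1.
    have := hfdec k; have := hfmono _ _ hk.
    have : q <= gamma * vnorm (vsub (xt k) (x k)) ^+ 2.
      rewrite /q -subr_ge0 -mulrBr; apply: mulr_ge0 => //; rewrite subr_ge0.
      have := vnorm_ge0 _ _ (vsub (xt k) (x k)); move: hek he; clear; nra.
    rewrite mulrSr mulrDl mul1r; lra.
  have hC : 0 <= (f (x 0%N) - (f xstar - L)) / q.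
    by apply: divr_ge0; [have := hlow 0%N; lra | exact: ltW].
  have [N hN] := hdesc (Num.Def.archi_bound ((f (x 0%N) - (f xstar - L)) / q)).
  have hb := archi_boundP hC; rewrite ltr_pdivrMr // in hb.
  have := hlow N; lra.
have hxilim : forall e, 0 < e -> exists N, forall k, (N <= k)%N -> xi k < e.
  move=> e he.
  pose c := 1 - theta.
  have hc : 0 < c by rewrite /c; lra.
  have hdesc : forall m : nat, exists N, xi N * (1 + m%:R * c) <= xi0.
    elim=> [|m [N hN]]; first by exists 0%N; rewrite hxi0e mul0r addr0 mulr1.
    have [k [hk [hkH _]]] := hacc 1 ltr01 N.
    have hxk : xi k.+1 = theta * xi k.
      by case: (hP2 k).1 => // h; rewrite h ltxx in hkH.
    exists k.+1; rewrite hxk mulrSr.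
    have hm0 : 0 <= m%:R :> R := ler0n _ _.
    have e1 : theta * xi k * (1 + (m%:R + 1%:R) * c) =
              xi k * (1 + m%:R * c) - xi k * ((m%:R + 1) * c ^+ 2).
      by rewrite /c; ring.
    rewrite e1.
    have h2 : 0 <= xi k * ((m%:R + 1) * c ^+ 2).
      by apply: mulr_ge0; [exact: ltW | apply: mulr_ge0; [lra | exact: sqr_ge0]].
    have h3 : xi k * (1 + m%:R * c) <= xi N * (1 + m%:R * c).
      by apply: ler_wpM2r; [nra | exact: hxidec].
    lra.
  have hC : 0 <= xi0 / (e * c) by apply: divr_ge0; [exact: ltW | apply: ltW; exact: mulr_gt0].
  have [N hN] := hdesc (Num.Def.archi_bound (xi0 / (e * c))).
  have hb := archi_boundP hC; rewrite ltr_pdivrMr ?mulr_gt0 // in hb.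
  have hNe : xi N < e.
    rewrite ltNge; apply/negP => hle.
    set M := (Num.Def.archi_bound (xi0 / (e * c)))%:R in hN hb.
    have hM : 0 <= M by exact: ler0n.
    have : e * (1 + M * c) <= xi N * (1 + M * c) by apply: ler_wpM2r => //; nra.
    nra.
  by exists N => k hk; exact: le_lt_trans (hxidec _ _ hk) hNe.
have hDmono : forall k k', (k <= k')%N -> D k `<=` D k'.
  move=> k k' /subnK <-; elim: (k' - k)%N => [|j IH]; first by rewrite add0n.
  rewrite addSn => e he; exact: (hP2 (j + k)%N).2.1 _ (IH _ he).
have hDz_tr : forall k, (forall i, ~~ Ic i -> xt k i = xstar i) -> Dz Ic l u (xt k) d.
  move=> k hk; case: hd => [hz [hzc [hX hZ]]]; split => //; split => //; split.
    move=> i; rewrite /vadd; case: (boolP (Ic i)) => hi.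
      by rewrite hzc // addr0; exact: (hP1 k).1 i.
    rewrite hk //; exact: hX i.
  move=> i hi; rewrite /vadd hk //; exact: hZ i hi.
have hDin : exists N, forall k, (N <= k)%N -> D k d.
  have [T [g hg]] := Dz_fin _ _ Ic l u.
  apply: contrapT => hno.
  have hnd : forall k, ~ D k d.
    by move=> k hk; apply: hno; exists k => k' hk'; exact: hDmono _ _ hk' _ hk.
  pose m k := #|(finset (fun t : T => `[< D k (g t) >]))|.
  have hmS : forall k, (m k <= m k.+1)%N.
    move=> k; rewrite /m.
    have hsub : (finset (fun t : T => `[< D k (g t) >])) \subset (finset (fun t : T => `[< D k.+1 (g t) >])).
      apply/fintype.subsetP => t; rewrite !inE => h.
      exact: (hP2 k).2.1 _ h.
    exact: subset_leq_card hsub.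
  have hmmono : forall k k', (k <= k')%N -> (m k <= m k')%N.
    move=> k k' /subnK <-; elim: (k' - k)%N => [|j IH]; first by rewrite add0n.
    rewrite addSn; exact: leq_trans IH (hmS _).
  have hgrow : forall N, exists k, (N <= k)%N /\ (m k < m k.+1)%N.
    move=> N; have [k [hk [hkH hc]]] := hacc 1 ltr01 N.
    exists k; split => //.
    have hxtz : forall i, ~~ Ic i -> xt k i = xstar i.
      by move=> i hi; rewrite (hP1 k).2.1 // hclose.
    have hnsub : ~ (Dz Ic l u (xt k) `<=` D k).
      by move=> hs'; apply: (hnd k); apply: hs'; exact: hDz_tr.
    have [hsub hneq] := ((hP2 k).2.2.1 hkH).2 hnsub.
    have [e he1 he2] : exists2 e, D k.+1 e & ~ D k e.
      apply: contrapT => hne; apply: hneq; rewrite eqEsubset; split; last exact: (hP2 k).2.1.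
      move=> e he; apply: contrapT => hne'; apply: hne; by exists e.
    have [t ht] := hg _ _ (hP1 k).1 (hsub _ he1).
    rewrite /m.
    have hpr : (finset (fun t : T => `[< D k (g t) >])) \proper (finset (fun t : T => `[< D k.+1 (g t) >])).
      apply/properP; split.
        apply/fintype.subsetP => t'; rewrite !inE => h; exact: (hP2 k).2.1 _ h.
      exists t; first by rewrite inE; apply/asboolP; rewrite -ht.
      by rewrite inE; apply/negP => /asboolP; rewrite -ht.
    exact: proper_card hpr.
  have hunb : forall j, exists N, (j <= m N)%N.
    elim=> [|j [N hN]]; first by exists 0%N.
    have [k [hk hlt]] := hgrow N; exists k.+1.
    exact: leq_ltn_trans (leq_trans hN (hmmono _ _ hk)) hlt.
  have [N hN] := hunb (#|T|.+1).
  have := max_card (finset (fun t : T => `[< D N (g t) >])).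
  by move=> h; have := leq_trans hN h; rewrite ltnn.
apply/ler_addgt0Pr => e he.
have [N1 hN1] := hDin.
pose eta := e / (8 * L).
have heta : 0 < eta by apply: divr_gt0 => //; apply: mulr_gt0 => //; lra.
have hLeta : L * eta = e / 8.
  by rewrite /eta; field; rewrite gt_eqF.
have [N2 hN2] := hstep0 eta heta.
have he2 : 0 < e / 2 by lra.
have [N3 hN3] := hxilim (e / 2) he2.
pose rho := Num.min 1 eta.
have [hr0 [hr1 hr2]] : 0 < rho /\ rho <= 1 /\ rho <= eta.
  by rewrite /rho /Num.min /Order.min; case: (ltP 1 eta) => h; repeat split; lra.
have [k [hk [hkH hc]]] := hacc rho hr0 (N1 + N2 + N3)%N.
have hk1 : (N1 <= k)%N by apply: leq_trans hk; rewrite -addnA leq_addr.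
have hk2 : (N2 <= k)%N by apply: leq_trans hk; apply: leq_trans (leq_addl N1 N2) (leq_addr N3 _).
have hk3 : (N3 <= k)%N by apply: leq_trans hk; exact: leq_addl.
have hxz := hclose k (lt_le_trans hc hr1).
have hxtx : forall i, ~~ Ic i -> xt k i = x k i := (hP1 k).2.1.
have hxtz : forall i, ~~ Ic i -> xt k i = xstar i.
  by move=> i hi; rewrite hxtx // hxz.
have hDk := hN1 k hk1.
have [hDS hat] := ((hP2 k).2.2.1 hkH).1 d hDk.
rewrite hat in hDS.
have hzt := hDz_tr k hxtz.
have hfail := DS_fail _ _ _ _ _ _ _ _ _ hDS hzt.2.2.
have ev : forall a b : vec R n, vsub (vadd a d) (vadd b d) = vsub a b.
  by move=> a b; apply: funext => i; rewrite /vsub /vadd; ring.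
have L1 := hLipf (xt k) (x k) hxtx.
have L2 := hLipf (x k) xstar hxz.
have h3 : forall i, ~~ Ic i -> vadd (xt k) d i = vadd (x k) d i.
  by move=> i hi; rewrite /vadd hxtx.
have L3 := hLipf _ _ h3.
have h4 : forall i, ~~ Ic i -> vadd (x k) d i = vadd xstar d i.
  by move=> i hi; rewrite /vadd hxz.
have L4 := hLipf _ _ h4.
rewrite !ev in L3 L4.
have B1 : L * vnorm (vsub (xt k) (x k)) <= L * eta.
  exact: (ler_wpM2l (ltW hL) (ltW (hN2 k hk2))).
have B2 : L * vnorm (vsub (x k) xstar) <= L * eta.
  exact: (ler_wpM2l (ltW hL) (ltW (lt_le_trans hc hr2))).
have hxik := hN3 k hk3.
move: L1 L2 L3 L4; rewrite !ler_norml => /andP[a1 a2] /andP[b1 b2] /andP[c1 c2] /andP[d1 d2].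
lra.
Qed.
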